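(* Let $f$ be a Hamiltonian stationary torus. For every monochromatic holomorphic section $\alpha$ there is a unique $\mu\in\mathbb C_*$ such that $\alpha$ is $d^\mu$--parallel.
   Context: Identify $\mathbb R^4$ with $\mathbb H$ and $\mathbb C$ with $\mathrm{span}_{\mathbb R}\{1,i\}$; $\langle\cdot,\cdot\rangle$ is the Euclidean inner product on $\mathbb C\cong\mathbb R^2$. $\Gamma\subset\mathbb C$ a lattice, $\Gamma^*$ its dual lattice. A Hamiltonian stationary torus is a $\Gamma$-periodic conformal immersion $f:\mathbb C\to\mathbb H$ with $df=e^{j\beta/2}dz\,g$, $dz=dx+i\,dy$, $g$ nowhere zero, $\beta(z)=2\pi\langle\beta_0,z\rangle$, $0\ne\beta_0\in\Gamma^*$; convention $*dz=i\,dz$; left normal $N=e^{j\beta}i$. With $(dN)'=\frac12(dN-N*dN)$ define $H$ by $(dN)'=-df\,H$. For $\mu\in\mathbb C_*$, $d^\mu\alpha=d\alpha+\frac12df\,H\,(N\alpha(a-1)+\alpha b)$, $a=\frac{\mu+\mu^{-1}}2$, $b=\frac{\mu^{-1}-\mu}2i$ (acting from the right). With $h^{A,B}(\gamma)=e^{2\pi(\langle A,\gamma\rangle-i\langle B,\gamma\rangle)}$, $\Gamma^*_{A,B}=\{\delta\in\Gamma^*+\frac{\beta_0}2:|\delta-B|^2-|A|^2=\frac{|\beta_0|^2}4,\ \langle\delta-B,A\rangle=0\}$, $e_\delta(z)=e^{2\pi i\langle\delta,z\rangle}$, $\lambda_\delta=\frac2{\beta_0}(\delta-iA-B)$: a monochromatic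 holomorphic section is a nonzero complex multiple (on the right) of $e^{j\beta/2}(1-k\lambda_\delta)e_{\delta-B}e^{2\pi\langle A,\cdot\rangle}$ for some $(A,B)\in\mathbb C^2$ and $\delta\in\Gamma^*_{A,B}$. *)

(* Defs.v *)
From Stdlib Require Import Reals ZArith.
From Coquelicot Require Import Coquelicot.
Open Scope R_scope.

Record quat := Quat { q0 : R; q1 : R; q2 : R; q3 : R }.

Definition qzero : quat := Quat 0 0 0 0.
Definition qone  : quat := Quat 1 0 0 0.
Definition qi : quat := Quat 0 1 0 0.
Definition qj : quat := Quat 0 0 1 0.
Definition qk : quat := Quat 0 0 0 1.

Definition qadd (p q : quat) : quat :=
  Quat (q0 p + q0 q) (q1 p + q1 q) (q2 p + q2 q) (q3 p + q3 q).
Definition qopp (p : quat) : quat := Quat (- q0 p) (- q1 p) (- q2 p) (- q3 p).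
Definition qsub (p q : quat) : quat := qadd p (qopp q).
Definition qscal (r : R) (p : quat) : quat := Quat (r * q0 p) (r * q1 p) (r * q2 p) (r * q3 p).
Definition qmul (p q : quat) : quat :=
  Quat (q0 p * q0 q - q1 p * q1 q - q2 p * q2 q - q3 p * q3 q)
       (q0 p * q1 q + q1 p * q0 q + q2 p * q3 q - q3 p * q2 q)
       (q0 p * q2 q - q1 p * q3 q + q2 p * q0 q + q3 p * q1 q)
       (q0 p * q3 q + q1 p * q2 q - q2 p * q1 q + q3 p * q0 q).

Definition embC (z : C) : quat := Quat (fst z) (snd z) 0 0.

Definition expj (t : R) : quat := Quat (cos t) 0 (sin t) 0.

Definition cdot (u v : C) : R := fst u * fst v + snd u * snd v.
Definition cnorm2 (u : C) : R := cdot u u.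

Definition is_deriv_q (F : R -> quat) (t : R) (v : quat) : Prop :=
  is_derive (fun s => q0 (F s)) t (q0 v) /\ is_derive (fun s => q1 (F s)) t (q1 v) /\
  is_derive (fun s => q2 (F s)) t (q2 v) /\ is_derive (fun s => q3 (F s)) t (q3 v).
(* partial derivatives along dx and dy, i.e. the 1-form evaluated on d/dx, d/dy *)
Definition is_dx (F : C -> quat) (p : C) (v : quat) : Prop :=
  is_deriv_q (fun s => F (s, snd p)) (fst p) v.
Definition is_dy (F : C -> quat) (p : C) (v : quat) : Prop :=
  is_deriv_q (fun s => F (fst p, s)) (snd p) v.

Definition is_int (x : R) : Prop := exists n : Z, x = IZR n.
Definition in_lattice (w1 w2 : C) (g : C) : Prop :=
  exists m n : Z, g = (IZR m * fst w1 + IZR n * fst w2, IZR m * snd w1 + IZR n * snd w2).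
Definition lattice_basis (w1 w2 : C) : Prop := fst w1 * snd w2 - snd w1 * fst w2 <> 0.
Definition in_dual (w1 w2 : C) (d : C) : Prop :=
  forall g, in_lattice w1 w2 g -> is_int (cdot d g).

Definition beta (beta0 : C) (z : C) : R := 2 * PI * cdot beta0 z.
Definition Nrm (beta0 : C) (z : C) : quat := qmul (expj (beta beta0 z)) qi.
(* df = e^{j beta/2} dz g, evaluated on d/dx (dz = 1) and d/dy (dz = i) *)
Definition dfx (beta0 : C) (g : C -> quat) (z : C) : quat :=
  qmul (expj (beta beta0 z / 2)) (g z).
Definition dfy (beta0 : C) (g : C -> quat) (z : C) : quat :=
  qmul (qmul (expj (beta beta0 z / 2)) qi) (g z).

Definition ham_stat_torus (w1 w2 beta0 : C) (g : C -> quat) (f : C -> quat) : Prop :=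
  lattice_basis w1 w2 /\ beta0 <> 0%C /\ in_dual w1 w2 beta0 /\
  (forall z, g z <> qzero) /\
  (forall gam z, in_lattice w1 w2 gam -> f (Cplus z gam) = f z) /\
  (forall z, is_dx f z (dfx beta0 g z) /\ is_dy f z (dfy beta0 g z)).

(* H is defined by (dN)' = -df H, with (dN)' = 1/2 (dN - N *dN) and
   *w(d/dx) = w(d/dy), *w(d/dy) = -w(d/dx)  (convention *dz = i dz) *)
Definition is_mean_curv (beta0 : C) (g : C -> quat) (H : C -> quat) : Prop :=
  forall z Nx Ny, is_dx (Nrm beta0) z Nx -> is_dy (Nrm beta0) z Ny ->
    qscal (1/2) (qsub Nx (qmul (Nrm beta0 z) Ny)) = qopp (qmul (dfx beta0 g z) (H z)) /\
    qscal (1/2) (qadd Ny (qmul (Nrm beta0 z) Nx)) = qopp (qmul (dfy beta0 g z) (H z)).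

Definition amu (mu : C) : C := Cmult (RtoC (1/2)) (Cplus mu (Cinv mu)).
Definition bmu (mu : C) : C := Cmult (Cmult (RtoC (1/2)) (Cminus (Cinv mu) mu)) Ci.

(* the H-valued 1-form  1/2 df H (N alpha (a-1) + alpha b)  applied to a tangent vector,
   given df on that vector *)
Definition dmu_term (beta0 : C) (H : C -> quat) (mu : C) (alpha : C -> quat)
  (dfv : quat) (z : C) : quat :=
  qscal (1/2) (qmul (qmul dfv (H z))
    (qadd (qmul (qmul (Nrm beta0 z) (alpha z)) (embC (Cminus (amu mu) 1%C)))
          (qmul (alpha z) (embC (bmu mu))))).

Definition dmu_parallel (beta0 : C) (g : C -> quat) (H : C -> quat) (mu : C)
  (alpha : C -> quat) : Prop :=
  forall z, exists ax ay, is_dx alpha z ax /\ is_dy alpha z ay /\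
    qadd ax (dmu_term beta0 H mu alpha (dfx beta0 g z) z) = qzero /\
    qadd ay (dmu_term beta0 H mu alpha (dfy beta0 g z) z) = qzero.

Definition e_del (d : C) (z : C) : C := (cos (2 * PI * cdot d z), sin (2 * PI * cdot d z)).
Definition lambda_del (beta0 A B d : C) : C :=
  Cmult (Cdiv (RtoC 2) beta0) (Cminus (Cminus d (Cmult Ci A)) B).
Definition in_GammaAB (w1 w2 beta0 A B d : C) : Prop :=
  in_dual w1 w2 (Cminus d (Cmult (RtoC (1/2)) beta0)) /\
  cnorm2 (Cminus d B) - cnorm2 A = cnorm2 beta0 / 4 /\
  cdot (Cminus d B) A = 0.
Definition mono_base (beta0 A B d : C) (z : C) : quat :=
  qmul (qmul (qmul (expj (beta beta0 z / 2))
                   (qsub qone (qmul qk (embC (lambda_del beta0 A B d)))))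
             (embC (e_del (Cminus d B) z)))
       (embC (RtoC (exp (2 * PI * cdot A z)))).

Definition monochromatic (w1 w2 beta0 : C) (alpha : C -> quat) : Prop :=
  exists (A B d c : C), in_GammaAB w1 w2 beta0 A B d /\ c <> 0%C /\
    forall z, alpha z = qmul (mono_base beta0 A B d z) (embC c).

(* Main.v *)
Require Import Defs.
From Stdlib Require Import Reals Lra FunctionalExtensionality.
From Coquelicot Require Import Coquelicot.
Open Scope R_scope.


Definition Uq (l : C) := qsub qone (qmul qk (embC l)).
Definition Zr (l a b : C) : quat :=
  qadd (qmul (qmul qi (Uq l)) (embC a)) (qmul (Uq l) (embC b)).
Definition Cx (b1 b2 : R) := Quat 0 0 (PI*b2) (PI*b1).
Definition Cy (b1 b2 : R) := Quat 0 0 (-(PI*b1)) (PI*b2).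
Definition Yred (bb A1 D1 : R) (Cm : quat) (l a b : C) : quat :=
  qadd (qadd (qscal (PI*bb) (qmul qj (Uq l))) (qmul (Uq l) (embC (2*PI*A1, 2*PI*D1))))
       (qscal (1/2) (qmul Cm (Zr l a b))).

Definition mu0 (l : C) : C :=
  let n := fst l * fst l + snd l * snd l in
  ((fst l * fst l - snd l * snd l) / (n*n), - (2 * fst l * snd l) / (n*n)).

Lemma Uq_eq l1 l2 : Uq (l1,l2) = Quat 1 0 (-l2) (-l1).
Proof. unfold Uq, qsub, qone, qk, embC, qmul, qadd, qopp; cbn [q0 q1 q2 q3 fst snd]; f_equal; ring. Qed.

Lemma Zr_eq l1 l2 a1 a2 c1 c2 : Zr (l1,l2) (a1,a2) (c1,c2) =
  Quat (-a2 + c1) (a1 + c2) (l1*a1 - l2*a2 - l2*c1 - l1*c2) (-l2*a1 - l1*a2 - l1*c1 + l2*c2).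
Proof. unfold Zr; rewrite Uq_eq. unfold qi, embC, qmul, qadd; cbn [q0 q1 q2 q3 fst snd]; f_equal; ring. Qed.

Lemma Cinv_mu0 l : fst l * fst l + snd l * snd l <> 0 ->
  Cinv (mu0 l) = (fst l * fst l - snd l * snd l, 2 * fst l * snd l).
Proof.
  destruct l as [l1 l2]; cbn [fst snd]; intro hn.
  unfold Cinv, mu0; cbn [fst snd].
  set (n := l1*l1+l2*l2) in *.
  assert (hm : ((l1 * l1 - l2 * l2) / (n * n))^2 +
     (- (2 * l1 * l2) / (n * n))^2 = 1/(n*n)).
  { unfold n; field. unfold n in hn; exact hn. }
  rewrite hm. f_equal; unfold n; field; auto.
Qed.

Lemma amu_mu0 l1 l2 : l1*l1+l2*l2 <> 0 ->
  Cminus (amu (mu0 (l1,l2))) 1%C =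
  (((l1*l1-l2*l2)/((l1*l1+l2*l2)*(l1*l1+l2*l2)) + (l1*l1-l2*l2))/2 - 1,
   (-(2*l1*l2)/((l1*l1+l2*l2)*(l1*l1+l2*l2)) + 2*l1*l2)/2).
Proof.
  intro hn. unfold amu. rewrite Cinv_mu0 by exact hn.
  unfold mu0, Cminus, Cplus, Copp, Cmult, RtoC; cbn [fst snd]. f_equal; field; auto.
Qed.

Lemma bmu_mu0 l1 l2 : l1*l1+l2*l2 <> 0 ->
  bmu (mu0 (l1,l2)) =
  (-(2*l1*l2 - (-(2*l1*l2)/((l1*l1+l2*l2)*(l1*l1+l2*l2))))/2,
   ((l1*l1-l2*l2) - (l1*l1-l2*l2)/((l1*l1+l2*l2)*(l1*l1+l2*l2)))/2).
Proof.
  intro hn. unfold bmu. rewrite Cinv_mu0 by exact hn.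
  unfold mu0, Cminus, Cplus, Copp, Cmult, Ci, RtoC; cbn [fst snd]. f_equal; field; auto.
Qed.

Lemma key (b1 b2 A1 A2 D1 D2 l1 l2 : R) :
  b1*b1+b2*b2 <> 0 ->
  (D1*D1+D2*D2) - (A1*A1+A2*A2) = (b1*b1+b2*b2)/4 ->
  D1*A1 + D2*A2 = 0 ->
  l1 = 2/(b1*b1+b2*b2) * (b1*(D1+A2) + b2*(D2-A1)) ->
  l2 = 2/(b1*b1+b2*b2) * (b1*(D2-A1) - b2*(D1+A2)) ->
  l1*l1+l2*l2 <> 0 /\
  Yred b1 A1 D1 (Cx b1 b2) (l1,l2) (Cminus (amu (mu0 (l1,l2))) 1%C) (bmu (mu0 (l1,l2))) = qzero /\
  Yred b2 A2 D2 (Cy b1 b2) (l1,l2) (Cminus (amu (mu0 (l1,l2))) 1%C) (bmu (mu0 (l1,l2))) = qzero.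
Proof.
  intros hb hn ho hl1 hl2.
  set (nb := b1*b1+b2*b2) in *.
  assert (hP1 : A1 - D2 = -(l1*b2 + l2*b1)/2).
  { rewrite hl1, hl2. unfold nb; field. exact hb. }
  assert (hP2 : A2 + D1 = (l1*b1 - l2*b2)/2).
  { rewrite hl1, hl2. unfold nb; field. exact hb. }
  assert (hre : (A1-D2)*(A1+D2) - (A2+D1)*(D1-A2) = - nb/4).
  { replace ((A1-D2)*(A1+D2) - (A2+D1)*(D1-A2)) with (-((D1*D1+D2*D2) - (A1*A1+A2*A2))) by ring. rewrite hn. field. }
  assert (him : (A1-D2)*(D1-A2) + (A2+D1)*(A1+D2) = 0).
  { replace ((A1-D2)*(D1-A2) + (A2+D1)*(A1+D2)) with (2*(D1*A1 + D2*A2)) by ring. rewrite ho. ring. }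
  assert (hQ1 : (A1+D2) * ((A1-D2)*(A1-D2) + (A2+D1)*(A2+D1)) = - nb * (A1-D2) / 4).
  { replace ((A1+D2) * ((A1-D2)*(A1-D2) + (A2+D1)*(A2+D1))) with ((A1-D2)*((A1-D2)*(A1+D2) - (A2+D1)*(D1-A2)) + (A2+D1)*((A1-D2)*(D1-A2) + (A2+D1)*(A1+D2))) by ring. rewrite hre, him. field. }
  assert (hQ2 : (D1-A2) * ((A1-D2)*(A1-D2) + (A2+D1)*(A2+D1)) = nb * (A2+D1) / 4).
  { replace ((D1-A2) * ((A1-D2)*(A1-D2) + (A2+D1)*(A2+D1))) with ((A1-D2)*((A1-D2)*(D1-A2) + (A2+D1)*(A1+D2)) - (A2+D1)*((A1-D2)*(A1+D2) - (A2+D1)*(D1-A2))) by ring. rewrite hre, him. field. }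
  rewrite hP1, hP2 in hQ1, hQ2, hre.
  set (n := l1*l1+l2*l2).
  assert (hnP : (-(l1*b2 + l2*b1)/2) * (-(l1*b2 + l2*b1)/2) + ((l1*b1 - l2*b2)/2)*((l1*b1 - l2*b2)/2) = n * nb / 4).
  { unfold n, nb; field. }
  rewrite hnP in hQ1, hQ2.
  assert (hn0 : n <> 0).
  { intro h0. assert (l1 = 0 /\ l2 = 0) as [e1 e2] by (unfold n in h0; split; nra).
    rewrite e1, e2 in hre. apply hb. fold nb. lra. }
  assert (eQ1 : A1 + D2 = (l1*b2 + l2*b1)/(2*n)).
  { apply (Rmult_eq_reg_r (n*nb/4)); [|unfold nb in *; intro; apply hb; nra].
    rewrite hQ1. field. auto. }
  assert (eQ2 : D1 - A2 = (l1*b1 - l2*b2)/(2*n)).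
  { apply (Rmult_eq_reg_r (n*nb/4)); [|unfold nb in *; intro; apply hb; nra].
    rewrite hQ2. field. auto. }
  assert (eA1 : A1 = ((-(l1*b2 + l2*b1)/2) + (l1*b2 + l2*b1)/(2*n))/2) by lra.
  assert (eD2 : D2 = ((l1*b2 + l2*b1)/(2*n) - (-(l1*b2 + l2*b1)/2))/2) by lra.
  assert (eA2 : A2 = ((l1*b1 - l2*b2)/2 - (l1*b1 - l2*b2)/(2*n))/2) by lra.
  assert (eD1 : D1 = ((l1*b1 - l2*b2)/2 + (l1*b1 - l2*b2)/(2*n))/2) by lra.
  split; [exact hn0|].
  clear hl1 hl2 hP1 hP2 hre him hQ1 hQ2 hnP eQ1 eQ2 hn ho.
  rewrite amu_mu0, bmu_mu0 by exact hn0. fold n.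
  unfold Yred. rewrite Uq_eq, Zr_eq.
  unfold Cx, Cy, qadd, qscal, qmul, embC, qj, qzero; cbn [q0 q1 q2 q3 fst snd].
  subst A1 A2 D1 D2. unfold n in *.
  split; f_equal; field; auto.
Qed.


Definition E2 (c s : R) := Quat (c*c - s*s) 0 (2*s*c) 0.
Definition Nq (c s : R) := qmul (E2 c s) qi.
Definition Nd (bb c s : R) := qscal (2*PI*bb) (qmul (qmul qj (E2 c s)) qi).

Lemma Nq_eq c s : Nq c s = Quat 0 (c*c - s*s) 0 (-(2*s*c)).
Proof. unfold Nq, E2, qmul, qi; cbn [q0 q1 q2 q3]; f_equal; ring. Qed.
Lemma Nd_eq bb c s : Nd bb c s = Quat 0 (-(2*PI*bb*(2*s*c))) 0 (-(2*PI*bb*(c*c-s*s))).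
Proof. unfold Nd, E2, qmul, qscal, qi, qj; cbn [q0 q1 q2 q3]; f_equal; ring. Qed.

Lemma fac3' c s Z :
  qmul (Nq c s) (qmul (Quat c 0 s 0) Z) = qmul (Quat c 0 s 0) (qscal (c*c+s*s) (qmul qi Z)).
Proof.
  destruct Z as [z0 z1 z2 z3]. rewrite Nq_eq.
  unfold qmul, qi, qscal; cbn [q0 q1 q2 q3]. f_equal; ring.
Qed.

Lemma fac1' b1 b2 c s Z :
  qmul (qopp (qscal (1/2) (qsub (Nd b1 c s) (qmul (Nq c s) (Nd b2 c s))))) (qmul (Quat c 0 s 0) Z)
  = qmul (Quat c 0 s 0) (qmul (Cx (b1*(c*c+s*s)) (b2*((c*c+s*s)*(c*c+s*s)))) Z).
Proof.
  destruct Z as [z0 z1 z2 z3]. rewrite Nq_eq, !Nd_eq.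
  unfold qsub, Cx, qmul, qopp, qscal, qadd; cbn [q0 q1 q2 q3]. f_equal; field.
Qed.

Lemma fac2' b1 b2 c s Z :
  qmul (qopp (qscal (1/2) (qadd (Nd b2 c s) (qmul (Nq c s) (Nd b1 c s))))) (qmul (Quat c 0 s 0) Z)
  = qmul (Quat c 0 s 0) (qmul (Cy (b1*((c*c+s*s)*(c*c+s*s))) (b2*(c*c+s*s))) Z).
Proof.
  destruct Z as [z0 z1 z2 z3]. rewrite Nq_eq, !Nd_eq.
  unfold qsub, Cy, qmul, qopp, qscal, qadd; cbn [q0 q1 q2 q3]. f_equal; field.
Qed.

Lemma fac3 c s Z : c*c+s*s = 1 ->
  qmul (Nq c s) (qmul (Quat c 0 s 0) Z) = qmul (Quat c 0 s 0) (qmul qi Z).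
Proof.
  intro h. rewrite fac3', h. f_equal. generalize (qmul qi Z); intros [a b d e].
  unfold qscal; cbn [q0 q1 q2 q3]; f_equal; ring.
Qed.
Lemma fac1 b1 b2 c s Z : c*c+s*s = 1 ->
  qmul (qopp (qscal (1/2) (qsub (Nd b1 c s) (qmul (Nq c s) (Nd b2 c s))))) (qmul (Quat c 0 s 0) Z)
  = qmul (Quat c 0 s 0) (qmul (Cx b1 b2) Z).
Proof. intro h. rewrite fac1', h. do 2 f_equal; unfold Cx; f_equal; ring. Qed.
Lemma fac2 b1 b2 c s Z : c*c+s*s = 1 ->
  qmul (qopp (qscal (1/2) (qadd (Nd b2 c s) (qmul (Nq c s) (Nd b1 c s))))) (qmul (Quat c 0 s 0) Z)
  = qmul (Quat c 0 s 0) (qmul (Cy b1 b2) Z).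
Proof. intro h. rewrite fac2', h. do 2 f_equal; unfold Cy; f_equal; ring. Qed.


Definition Phi (A D c : C) (z : C) : C :=
  Cmult (Cmult (e_del D z) (RtoC (exp (2 * PI * cdot A z)))) c.
Definition monog (beta0 A D l c : C) (z : C) : quat :=
  qmul (qmul (qmul (qmul (expj (beta beta0 z / 2)) (Uq l))
             (embC (e_del D z))) (embC (RtoC (exp (2 * PI * cdot A z))))) (embC c).
Definition axf (beta0 A D l c : C) (z : C) : quat :=
  qmul (qmul (expj (beta beta0 z / 2))
     (qadd (qscal (PI * fst beta0) (qmul qj (Uq l)))
           (qmul (Uq l) (embC (2 * PI * fst A, 2 * PI * fst D)))))
     (embC (Phi A D c z)).
Definition ayf (beta0 A D l c : C) (z : C) : quat :=
  qmul (qmul (expj (beta beta0 z / 2))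
     (qadd (qscal (PI * snd beta0) (qmul qj (Uq l)))
           (qmul (Uq l) (embC (2 * PI * snd A, 2 * PI * snd D)))))
     (embC (Phi A D c z)).

Lemma monog_dx beta0 A D l c z :
  is_dx (monog beta0 A D l c) z (axf beta0 A D l c z).
Proof.
  destruct z as [x y], beta0 as [b1 b2], A as [A1 A2], D as [D1 D2], l as [l1 l2], c as [c1 c2].
  unfold is_dx, is_deriv_q; simpl.
  unfold monog, axf, Phi, Uq, e_del, beta, cdot, qmul, qsub, qadd, qopp, qscal, embC, expj, qone, qk, qj, Cmult, RtoC; simpl.
  unfold Rdiv; split; [|split; [|split]]; auto_derive; auto; field.
Qed.
Lemma monog_dy beta0 A D l c z :
  is_dy (monog beta0 A D l c) z (ayf beta0 A D l c z).
Proof.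
  destruct z as [x y], beta0 as [b1 b2], A as [A1 A2], D as [D1 D2], l as [l1 l2], c as [c1 c2].
  unfold is_dy, is_deriv_q; simpl.
  unfold monog, ayf, Phi, Uq, e_del, beta, cdot, qmul, qsub, qadd, qopp, qscal, embC, expj, qone, qk, qj, Cmult, RtoC; simpl.
  unfold Rdiv; split; [|split; [|split]]; auto_derive; auto; field.
Qed.

Definition Ndx (beta0 : C) (z : C) : quat :=
  qscal (2*PI*fst beta0) (qmul (qmul qj (expj (beta beta0 z))) qi).
Definition Ndy (beta0 : C) (z : C) : quat :=
  qscal (2*PI*snd beta0) (qmul (qmul qj (expj (beta beta0 z))) qi).

Lemma Nrm_dx beta0 z : is_dx (Nrm beta0) z (Ndx beta0 z).
Proof.
  destruct z as [x y], beta0 as [b1 b2].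
  unfold is_dx, is_deriv_q, Nrm, Ndx, beta, cdot, qmul, qscal, expj, qi, qj; cbn [q0 q1 q2 q3 fst snd].
  unfold Rdiv; split; [|split; [|split]]; auto_derive; auto; field.
Qed.
Lemma Nrm_dy beta0 z : is_dy (Nrm beta0) z (Ndy beta0 z).
Proof.
  destruct z as [x y], beta0 as [b1 b2].
  unfold is_dy, is_deriv_q, Nrm, Ndy, beta, cdot, qmul, qscal, expj, qi, qj; cbn [q0 q1 q2 q3 fst snd].
  unfold Rdiv; split; [|split; [|split]]; auto_derive; auto; field.
Qed.

Lemma expj_E2 t : expj t = E2 (cos (t/2)) (sin (t/2)).
Proof.
  unfold expj, E2. rewrite <- cos_2a, <- sin_2a.
  replace (2*(t/2)) with t by field. reflexivity.
Qed.

Lemma cs1 t : cos t * cos t + sin t * sin t = 1.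
Proof. pose proof (sin2_cos2 t) as h. unfold Rsqr in h. lra. Qed.

Lemma Nrm_fac beta0 z Z :
  qmul (Nrm beta0 z) (qmul (expj (beta beta0 z / 2)) Z) =
  qmul (expj (beta beta0 z / 2)) (qmul qi Z).
Proof.
  unfold Nrm. rewrite (expj_E2 (beta beta0 z)).
  exact (fac3 _ _ Z (cs1 _)).
Qed.

Lemma dfx_fac beta0 z Z :
  qmul (qopp (qscal (1/2) (qsub (Ndx beta0 z) (qmul (Nrm beta0 z) (Ndy beta0 z)))))
    (qmul (expj (beta beta0 z / 2)) Z) =
  qmul (expj (beta beta0 z / 2)) (qmul (Cx (fst beta0) (snd beta0)) Z).
Proof.
  unfold Nrm, Ndx, Ndy. rewrite (expj_E2 (beta beta0 z)).
  exact (fac1 _ _ _ _ Z (cs1 _)).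
Qed.

Lemma dfy_fac beta0 z Z :
  qmul (qopp (qscal (1/2) (qadd (Ndy beta0 z) (qmul (Nrm beta0 z) (Ndx beta0 z)))))
    (qmul (expj (beta beta0 z / 2)) Z) =
  qmul (expj (beta beta0 z / 2)) (qmul (Cy (fst beta0) (snd beta0)) Z).
Proof.
  unfold Nrm, Ndx, Ndy. rewrite (expj_E2 (beta beta0 z)).
  exact (fac2 _ _ _ _ Z (cs1 _)).
Qed.

Lemma qmul_assoc p q r : qmul (qmul p q) r = qmul p (qmul q r).
Proof. destruct p as [p0 p1 p2 p3], q as [r0 r1 r2 r3], r as [s0 s1 s2 s3]; unfold qmul; cbn [q0 q1 q2 q3]; f_equal; ring. Qed.

Lemma qopp_opp p : qopp (qopp p) = p.
Proof. destruct p as [p0 p1 p2 p3]; unfold qopp; cbn [q0 q1 q2 q3]; f_equal; ring. Qed.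

Lemma monog_fac beta0 A D l c z :
  monog beta0 A D l c z = qmul (expj (beta beta0 z / 2)) (qmul (Uq l) (embC (Phi A D c z))).
Proof.
  unfold monog, Phi.
  generalize (expj (beta beta0 z / 2)) (Uq l) (e_del D z) (exp (2 * PI * cdot A z)).
  intros [e0 e1 e2 e3] [u0 u1 u2 u3] [p1 p2] r. destruct c as [c1 c2].
  unfold qmul, embC, Cmult, RtoC; cbn [q0 q1 q2 q3 fst snd]; f_equal; ring.
Qed.

Lemma W2 E l ph a b :
  qadd (qmul E (qmul qi (qmul (qmul (Uq l) (embC ph)) (embC a))))
       (qmul (qmul E (qmul (Uq l) (embC ph))) (embC b)) =
  qmul E (qmul (Zr l a b) (embC ph)).
Proof.
  unfold Zr. generalize (Uq l).
  intros [u0 u1 u2 u3]. destruct E as [e0 e1 e2 e3], ph as [p1 p2], a as [a1 a2], b as [b1 b2].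
  unfold qadd, qmul, embC, qi; cbn [q0 q1 q2 q3 fst snd]; f_equal; ring.
Qed.

Lemma Yfac_x b1 b2 A1 A2 D1 D2 l c z a b :
  qadd (axf (b1,b2) (A1,A2) (D1,D2) l c z)
    (qscal (1/2) (qmul (expj (beta (b1,b2) z / 2)) (qmul (Cx b1 b2) (qmul (Zr l a b) (embC (Phi (A1,A2) (D1,D2) c z)))))) =
  qmul (expj (beta (b1,b2) z / 2)) (qmul (Yred b1 A1 D1 (Cx b1 b2) l a b) (embC (Phi (A1,A2) (D1,D2) c z))).
Proof.
  unfold axf, Yred. cbn [fst snd].
  generalize (expj (beta (b1,b2) z / 2)) (Uq l) (Zr l a b) (Phi (A1,A2) (D1,D2) c z) (Cx b1 b2).
  intros [e0 e1 e2 e3] [u0 u1 u2 u3] [w0 w1 w2 w3] [p1 p2] [m0 m1 m2 m3].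
  unfold qadd, qmul, qscal, embC, qj; cbn [q0 q1 q2 q3 fst snd]; f_equal; field.
Qed.

Lemma Yfac_y b1 b2 A1 A2 D1 D2 l c z a b :
  qadd (ayf (b1,b2) (A1,A2) (D1,D2) l c z)
    (qscal (1/2) (qmul (expj (beta (b1,b2) z / 2)) (qmul (Cy b1 b2) (qmul (Zr l a b) (embC (Phi (A1,A2) (D1,D2) c z)))))) =
  qmul (expj (beta (b1,b2) z / 2)) (qmul (Yred b2 A2 D2 (Cy b1 b2) l a b) (embC (Phi (A1,A2) (D1,D2) c z))).
Proof.
  unfold ayf, Yred. cbn [fst snd].
  generalize (expj (beta (b1,b2) z / 2)) (Uq l) (Zr l a b) (Phi (A1,A2) (D1,D2) c z) (Cy b1 b2).
  intros [e0 e1 e2 e3] [u0 u1 u2 u3] [w0 w1 w2 w3] [p1 p2] [m0 m1 m2 m3].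
  unfold qadd, qmul, qscal, embC, qj; cbn [q0 q1 q2 q3 fst snd]; f_equal; field.
Qed.



Lemma qmul_zero E P : qmul E (qmul qzero P) = qzero.
Proof. destruct E as [p0 p1 p2 p3], P as [r0 r1 r2 r3]; unfold qmul, qzero; cbn [q0 q1 q2 q3]; f_equal; ring. Qed.

Lemma mu_decomp mu : mu = Cplus (Cplus (Cminus (amu mu) 1%C) 1%C) (Cmult Ci (bmu mu)).
Proof.
  destruct mu as [m1 m2]. unfold amu, bmu.
  generalize (Cinv (m1, m2)). intros [v1 v2].
  unfold Cminus, Cplus, Cmult, Copp, Ci, RtoC; cbn [fst snd]. f_equal; field.
Qed.

Definition qconj (p : quat) := Quat (q0 p) (- q1 p) (- q2 p) (- q3 p).
Definition qn2 (p : quat) := q0 p * q0 p + q1 p * q1 p + q2 p * q2 p + q3 p * q3 p.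

Lemma qscal_cancel r X Y : r <> 0 -> qscal r X = qscal r Y -> X = Y.
Proof.
  intros hr h. destruct X as [x0 x1 x2 x3], Y as [y0 y1 y2 y3].
  unfold qscal in h; cbn [q0 q1 q2 q3] in h. injection h; intros.
  f_equal; apply (Rmult_eq_reg_l r); auto.
Qed.

Lemma qcancel_l p X Y : qn2 p <> 0 -> qmul p X = qmul p Y -> X = Y.
Proof.
  intros hn h.
  assert (e : forall W, qmul (qconj p) (qmul p W) = qscal (qn2 p) W).
  { intros [w0 w1 w2 w3]; destruct p as [p0 p1 p2 p3]; unfold qmul, qconj, qscal, qn2; cbn [q0 q1 q2 q3]; f_equal; ring. }
  apply (qscal_cancel (qn2 p)); auto. rewrite <- !e, h. reflexivity.
Qed.

Lemma qcancel_r p X Y : qn2 p <> 0 -> qmul X p = qmul Y p -> X = Y.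
Proof.
  intros hn h.
  assert (e : forall W, qmul (qmul W p) (qconj p) = qscal (qn2 p) W).
  { intros [w0 w1 w2 w3]; destruct p as [p0 p1 p2 p3]; unfold qmul, qconj, qscal, qn2; cbn [q0 q1 q2 q3]; f_equal; ring. }
  apply (qscal_cancel (qn2 p)); auto. rewrite <- !e, h. reflexivity.
Qed.

Lemma qadd_same p q r : qadd p q = qzero -> qadd p r = qzero -> q = r.
Proof.
  destruct p as [p0 p1 p2 p3], q as [r0 r1 r2 r3], r as [s0 s1 s2 s3]; unfold qadd, qzero; cbn [q0 q1 q2 q3]; intros h1 h2.
  injection h1; injection h2; intros; f_equal; lra.
Qed.

Lemma Zr_inj l1 l2 a b a' b' : l1*l1+l2*l2 <> 0 ->
  Zr (l1,l2) a b = Zr (l1,l2) a' b' -> a = a' /\ b = b'.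
Proof.
  intros hn h. destruct a as [x1 x2], b as [y1 y2], a' as [x1' x2'], b' as [y1' y2'].
  rewrite !Zr_eq in h. injection h; intros e3 e2 e1 e0.
  assert (hv1 : y1 - y1' = x2 - x2') by lra.
  assert (hv2 : y2 - y2' = -(x1 - x1')) by lra.
  assert (h3 : l1*(x1-x1') - l2*(x2-x2') - l2*(y1-y1') - l1*(y2-y2') = 0) by lra.
  assert (h4 : -l2*(x1-x1') - l1*(x2-x2') - l1*(y1-y1') + l2*(y2-y2') = 0) by lra.
  rewrite hv1, hv2 in h3, h4.
  assert (u1 : (l1*l1+l2*l2)*(x1-x1') = 0).
  { replace ((l1*l1+l2*l2)*(x1-x1')) with (l1*(l1*(x1-x1') - l2*(x2-x2') - l2*(x2-x2') - l1*(-(x1-x1')))/2 - l2*(-l2*(x1-x1') - l1*(x2-x2') - l1*(x2-x2') + l2*(-(x1-x1')))/2) by field.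
    rewrite h3, h4. field. }
  assert (u2 : (l1*l1+l2*l2)*(x2-x2') = 0).
  { replace ((l1*l1+l2*l2)*(x2-x2')) with (-l2*(l1*(x1-x1') - l2*(x2-x2') - l2*(x2-x2') - l1*(-(x1-x1')))/2 - l1*(-l2*(x1-x1') - l1*(x2-x2') - l1*(x2-x2') + l2*(-(x1-x1')))/2) by field.
    rewrite h3, h4. field. }
  apply Rmult_integral in u1; apply Rmult_integral in u2.
  destruct u1 as [u1|u1]; [contradiction|]. destruct u2 as [u2|u2]; [contradiction|].
  split; f_equal; lra.
Qed.

Lemma Phi_n2 (A D c z : C) : c <> 0%C -> qn2 (embC (Phi A D c z)) <> 0.
Proof.
  intro hc. destruct c as [c1 c2].
  assert (hc' : c1*c1+c2*c2 > 0).
  { destruct (Req_dec c1 0), (Req_dec c2 0); [|nra|nra|nra]. subst. exfalso; apply hc; reflexivity. }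
  unfold qn2, embC, Phi, e_del, Cmult, RtoC; cbn [q0 q1 q2 q3 fst snd].
  set (t := 2 * PI * cdot D z). set (r := exp (2 * PI * cdot A z)).
  assert (hr : r > 0) by apply exp_pos.
  replace ((cos t * r - sin t * 0) * c1 - (cos t * 0 + sin t * r) * c2) with (r*(cos t * c1 - sin t * c2)) by ring.
  replace ((cos t * r - sin t * 0) * c2 + (cos t * 0 + sin t * r) * c1) with (r*(cos t * c2 + sin t * c1)) by ring.
  replace (r * (cos t * c1 - sin t * c2) * (r * (cos t * c1 - sin t * c2)) +
    r * (cos t * c2 + sin t * c1) * (r * (cos t * c2 + sin t * c1)) + 0 * 0 + 0 * 0)
    with (r*r*(c1*c1+c2*c2)*(cos t * cos t + sin t * sin t)) by ring.
  rewrite cs1, Rmult_1_r. apply Rgt_not_eq. apply Rmult_gt_0_compat; [apply Rmult_gt_0_compat; exact hr|exact hc'].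
Qed.

Lemma dy_unique F z v w : is_dy F z v -> is_dy F z w -> v = w.
Proof.
  unfold is_dy, is_deriv_q. intros [a0 [a1 [a2 a3]]] [b0 [b1 [b2 b3]]].
  destruct v as [v0 v1 v2 v3], w as [w0 w1 w2 w3]; cbn [q0 q1 q2 q3] in *. f_equal.
  - rewrite <- (is_derive_unique _ _ _ a0), <- (is_derive_unique _ _ _ b0); reflexivity.
  - rewrite <- (is_derive_unique _ _ _ a1), <- (is_derive_unique _ _ _ b1); reflexivity.
  - rewrite <- (is_derive_unique _ _ _ a2), <- (is_derive_unique _ _ _ b2); reflexivity.
  - rewrite <- (is_derive_unique _ _ _ a3), <- (is_derive_unique _ _ _ b3); reflexivity.
Qed.


Theorem lemma5p3 (w1 w2 beta0 : C) (g f H : C -> quat)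
  (hf : ham_stat_torus w1 w2 beta0 g f)
  (hH : is_mean_curv beta0 g H)
  (alpha : C -> quat) (halpha : monochromatic w1 w2 beta0 alpha) :
  exists! mu : C, mu <> 0%C /\ dmu_parallel beta0 g H mu alpha.
Proof.
  destruct hf as (_ & hb0 & _ & _ & _ & _).
  destruct halpha as (A & B & d & c & (_ & hn & ho) & hc & hal).
  assert (ha : alpha = monog beta0 A (Cminus d B) (lambda_del beta0 A B d) c).
  { apply functional_extensionality; intro z; rewrite hal; reflexivity. }
  subst alpha. clear hal.
  destruct beta0 as [b1 b2].
  assert (hb : b1*b1+b2*b2 <> 0).
  { intro h0. apply hb0. assert (e1 : b1 = 0) by nra. assert (e2 : b2 = 0) by nra.
    rewrite e1, e2. reflexivity. }
  assert (hl1 : fst (lambda_del (b1,b2) A B d) =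
     2/(b1*b1+b2*b2) * (b1*(fst (Cminus d B) + snd A) + b2*(snd (Cminus d B) - fst A))).
  { unfold lambda_del, Cdiv, Cminus, Cmult, Cplus, Copp, Cinv, Ci, RtoC. cbn [fst snd].
    field. intro h; apply hb; nra. }
  assert (hl2 : snd (lambda_del (b1,b2) A B d) =
     2/(b1*b1+b2*b2) * (b1*(snd (Cminus d B) - fst A) - b2*(fst (Cminus d B) + snd A))).
  { unfold lambda_del, Cdiv, Cminus, Cmult, Cplus, Copp, Cinv, Ci, RtoC. cbn [fst snd].
    field. intro h; apply hb; nra. }
  set (D := Cminus d B) in *. set (l := lambda_del (b1,b2) A B d) in *.
  clearbody D l.
  destruct A as [A1 A2], D as [D1 D2], l as [l1 l2]. cbn [fst snd] in hl1, hl2.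
  unfold cnorm2, cdot in hn, ho. cbn [fst snd] in hn, ho.
  destruct (key b1 b2 A1 A2 D1 D2 l1 l2 hb hn ho hl1 hl2) as (hl0 & hYx & hYy).
  set (al := monog (b1,b2) (A1,A2) (D1,D2) (l1,l2) c).
  assert (hdmx : forall mu z, dmu_term (b1,b2) H mu al (dfx (b1,b2) g z) z =
     qscal (1/2) (qmul (expj (beta (b1,b2) z / 2)) (qmul (Cx b1 b2)
       (qmul (Zr (l1,l2) (Cminus (amu mu) 1%C) (bmu mu)) (embC (Phi (A1,A2) (D1,D2) c z)))))).
  { intros mu z. destruct (hH z _ _ (Nrm_dx (b1,b2) z) (Nrm_dy (b1,b2) z)) as [h1 h2].
    unfold dmu_term.
    assert (e1 : qmul (dfx (b1,b2) g z) (H z) =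
      qopp (qscal (1/2) (qsub (Ndx (b1,b2) z) (qmul (Nrm (b1,b2) z) (Ndy (b1,b2) z))))).
    { rewrite h1. symmetry. apply qopp_opp. }
    rewrite e1. unfold al. rewrite monog_fac.
    rewrite (qmul_assoc (Nrm (b1,b2) z)).
    rewrite (qmul_assoc (expj (beta (b1,b2) z / 2)) _ (embC (Cminus (amu mu) 1%C))).
    rewrite Nrm_fac, W2, dfx_fac. reflexivity. }
  assert (hdmy : forall mu z, dmu_term (b1,b2) H mu al (dfy (b1,b2) g z) z =
     qscal (1/2) (qmul (expj (beta (b1,b2) z / 2)) (qmul (Cy b1 b2)
       (qmul (Zr (l1,l2) (Cminus (amu mu) 1%C) (bmu mu)) (embC (Phi (A1,A2) (D1,D2) c z)))))).
  { intros mu z. destruct (hH z _ _ (Nrm_dx (b1,b2) z) (Nrm_dy (b1,b2) z)) as [h1 h2].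
    unfold dmu_term.
    assert (e1 : qmul (dfy (b1,b2) g z) (H z) =
      qopp (qscal (1/2) (qadd (Ndy (b1,b2) z) (qmul (Nrm (b1,b2) z) (Ndx (b1,b2) z))))).
    { rewrite h2. symmetry. apply qopp_opp. }
    rewrite e1. unfold al. rewrite monog_fac.
    rewrite (qmul_assoc (Nrm (b1,b2) z)).
    rewrite (qmul_assoc (expj (beta (b1,b2) z / 2)) _ (embC (Cminus (amu mu) 1%C))).
    rewrite Nrm_fac, W2, dfy_fac. reflexivity. }
  assert (hey0 : forall z, qadd (ayf (b1,b2) (A1,A2) (D1,D2) (l1,l2) c z)
      (dmu_term (b1,b2) H (mu0 (l1,l2)) al (dfy (b1,b2) g z) z) = qzero).
  { intro z. rewrite hdmy, Yfac_y, hYy. apply qmul_zero. }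
  exists (mu0 (l1,l2)). split; [split|].
  - intro h. assert (h1 := f_equal fst h). assert (h2 := f_equal snd h).
    unfold mu0 in h1, h2. cbn [fst snd RtoC] in h1, h2.
    set (n := l1*l1+l2*l2) in *.
    assert (k1 : l1*l1 - l2*l2 = 0).
    { replace (l1*l1-l2*l2) with ((l1*l1-l2*l2)/(n*n)*(n*n)) by (field; exact hl0).
      rewrite h1. ring. }
    assert (k2 : 2*l1*l2 = 0).
    { replace (2*l1*l2) with (-(-(2*l1*l2)/(n*n)*(n*n))) by (field; exact hl0).
      rewrite h2. ring. }
    apply hl0. unfold n. nra.
  - intro z. exists (axf (b1,b2) (A1,A2) (D1,D2) (l1,l2) c z), (ayf (b1,b2) (A1,A2) (D1,D2) (l1,l2) c z).
    split; [apply monog_dx|]. split; [apply monog_dy|]. split.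
    + rewrite hdmx, Yfac_x, hYx. apply qmul_zero.
    + apply hey0.
  - intros mu' [hmu' hpar].
    destruct (hpar (0,0)) as (ax & ay & hax & hay & ex & ey).
    assert (eay : ay = ayf (b1,b2) (A1,A2) (D1,D2) (l1,l2) c (0,0)).
    { eapply dy_unique; [exact hay| apply monog_dy]. }
    rewrite eay in ey. clear eay hay hax ex.
    pose proof (qadd_same _ _ _ (hey0 (0,0)) ey) as e.
    rewrite !hdmy in e.
    apply qscal_cancel in e; [|lra].
    apply qcancel_l in e.
    2:{ set (t := beta (b1,b2) (0,0) / 2). unfold qn2, expj; cbn [q0 q1 q2 q3].
        replace (cos t * cos t + 0 * 0 + sin t * sin t + 0 * 0) with (cos t * cos t + sin t * sin t) by ring.
        rewrite cs1. lra. }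
    apply qcancel_l in e.
    2:{ unfold qn2, Cy; cbn [q0 q1 q2 q3].
        replace (0*0 + 0*0 + - (PI*b1) * - (PI*b1) + PI*b2*(PI*b2)) with (PI*PI*(b1*b1+b2*b2)) by ring.
        apply Rmult_integral_contrapositive_currified; [|exact hb].
        pose proof PI_RGT_0. nra. }
    apply qcancel_r in e; [|apply Phi_n2; exact hc].
    destruct (Zr_inj _ _ _ _ _ _ hl0 e) as [ea eb].
    rewrite (mu_decomp (mu0 (l1,l2))), (mu_decomp mu'), ea, eb. reflexivity.
Qed.
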